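(* Let $(V,\mathcal H,\iota,W)$ be an abelian generalized functional theory with set of weights $\Omega$. Then the set of representable densities $\iota^*(\mathcal P)=\iota^*(\mathcal E)=\mathrm{conv}(\Omega)$ is a convex polytope of dimension $\dim V-\dim\iota^{-1}(\mathrm{span}\{\mathbb 1\})$.
   Context: A generalized functional theory is a tuple $(V,\mathcal H,\iota,W)$ with $V$ a finite-dimensional real vector space, $\mathcal H$ a finite-dimensional complex Hilbert space, $\iota:V\to i\mathfrak u(\mathcal H)$ linear into the Hermitian operators, $W$ Hermitian. States are regarded as elements of $(i\mathfrak u(\mathcal H))^*$ via the trace pairing; $\iota^*$ is the dual map; $\mathcal P$ = pure states, $\mathcal E$ = density operators; $\mathbb 1$ is the identity on $\mathcal H$. The theory is abelian if $[\iota(v),\iota(v')]=0$ for all $v,v'$. A weight is $\alpha\in V^*$ such that some nonzero $\psi$ satisfies $\iota(v)\psi=\langle\alpha,v\rangle\psi$ for all $v$; $\Omega$ denotes the (finite) set of weights. *)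

(* Defs.v *)
From HB Require Import structures.
From mathcomp Require Import all_boot all_order all_algebra.
From mathcomp Require Import complex.
From mathcomp Require Import boolp classical_sets reals.
Set Implicit Arguments. Unset Strict Implicit. Unset Printing Implicit Defensive.
Import Order.TTheory GRing.Theory Num.Theory.
Local Open Scope ring_scope.
Local Open Scope classical_set_scope.
Local Open Scope complex_scope.

(* Conventions: V = R^n (row vectors 'rV[R]_n), V^* identified with 'rV[R]_n
   via the pairing  <alpha, v> = sum_k alpha_k v_k ;
   H = C^(m+1) (a nonzero finite-dim complex Hilbert space), operators are
   'M[R[i]]_(m.+1). *)

Section Defs.
Variable R : realType.
Local Notation C := (R[i]).

Definition pairing n (alpha v : 'rV[R]_n) : R := \sum_k alpha 0 k * v 0 k.

Definition ctr p q (A : 'M[C]_(p, q)) : 'M[C]_(q, p) := (map_mx Num.conj A)^T.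

Definition herm_op p (A : 'M[C]_p) : Prop := ctr A = A.

Definition real_linear n p (iota : 'rV[R]_n -> 'M[C]_p) : Prop :=
  forall (a : R) (v w : 'rV[R]_n), iota (a *: v + w) = a%:C *: iota v + iota w.

Definition abelian_theory n p (iota : 'rV[R]_n -> 'M[C]_p) : Prop :=
  forall v v', iota v *m iota v' = iota v' *m iota v.

Definition pure_states p : set 'M[C]_p :=
  [set rho | exists psi : 'cV[C]_p, ctr psi *m psi = 1 /\ rho = psi *m ctr psi].

Definition density_ops p : set 'M[C]_p :=
  [set rho | herm_op rho /\ (forall x : 'cV[C]_p, 0 <= (ctr x *m rho *m x) 0 0)
             /\ \tr rho = 1].

(* iota^* (X): image of a set of states under the dual map, states acting on
   Hermitian operators by the trace pairing rho(A) = tr(rho A). *)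
Definition iota_star n p (iota : 'rV[R]_n -> 'M[C]_p) (X : set 'M[C]_p)
  : set 'rV[R]_n :=
  [set alpha | exists rho, X rho /\
     forall v, \tr (rho *m iota v) = (pairing alpha v)%:C].

Definition weights n p (iota : 'rV[R]_n -> 'M[C]_p) : set 'rV[R]_n :=
  [set alpha | exists psi : 'cV[C]_p, psi != 0 /\
     forall v, iota v *m psi = (pairing alpha v)%:C *: psi].

Definition conv n (S : set 'rV[R]_n) : set 'rV[R]_n :=
  [set x | exists k (s : 'I_k -> 'rV[R]_n) (l : 'I_k -> R),
     (forall i, S (s i)) /\ (forall i, 0 <= l i) /\ \sum_i l i = 1 /\
     x = \sum_i l i *: s i].

Definition is_polytope n (S : set 'rV[R]_n) : Prop :=
  exists s : seq 'rV[R]_n, S = conv [set` s].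

Definition subspace_dim n (K : set 'rV[R]_n) (d : nat) : Prop :=
  exists k (M : 'M[R]_(k, n)), (forall v, K v <-> (v <= M)%MS) /\ \rank M = d.

Definition affine_dim n (S : set 'rV[R]_n) (d : nat) : Prop :=
  exists k (M : 'M[R]_(k, n)),
    (forall i, exists x y, S x /\ S y /\ row i M = x - y) /\
    (forall x y, S x -> S y -> (x - y <= M)%MS) /\ \rank M = d.

Definition preimage_span1 n p (iota : 'rV[R]_n -> 'M[C]_p) : set 'rV[R]_n :=
  [set v | exists c : R, iota v = c%:C%:M].

End Defs.

(* Main.v *)
Require Import Defs.
From HB Require Import structures.
From mathcomp Require Import all_boot all_order all_algebra.
From mathcomp Require Import complex.
From mathcomp Require Import boolp classical_sets reals.
Import Order.TTheory GRing.Theory Num.Theory.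
Local Open Scope ring_scope.
Local Open Scope classical_set_scope.
Local Open Scope complex_scope.
Set Implicit Arguments. Unset Strict Implicit. Unset Printing Implicit Defensive.
Lemma ctr_mul (R : realType) p q r (A : 'M[R[i]]_(p, q)) (B : 'M[R[i]]_(q, r)) :
  ctr (A *m B) = ctr B *m ctr A.
Proof. by rewrite /ctr map_mxM trmx_mul. Qed.

Lemma ctrK (R : realType) p q (A : 'M[R[i]]_(p, q)) : ctr (ctr A) = A.
Proof. by apply/matrixP => i j; rewrite !mxE conjCK. Qed.

Lemma ctrE (R : realType) p q (A : 'M[R[i]]_(p, q)) i j : ctr A i j = (A j i)^*%R.
Proof. by rewrite !mxE. Qed.

Lemma lin0 (R : realType) n p (iota : 'rV[R]_n -> 'M[R[i]]_p) :
  real_linear iota -> iota 0 = 0.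
Proof.
move=> lin; have := lin 1 0 0; rewrite scaler0 addr0 rmorph1 scale1r.
by move/(congr1 (fun X => X - iota 0)); rewrite addrK subrr => <-.
Qed.

Lemma linD (R : realType) n p (iota : 'rV[R]_n -> 'M[R[i]]_p) :
  real_linear iota -> forall v w, iota (v + w) = iota v + iota w.
Proof. by move=> lin v w; have := lin 1 v w; rewrite scale1r rmorph1 scale1r. Qed.

Lemma linZ (R : realType) n p (iota : 'rV[R]_n -> 'M[R[i]]_p) :
  real_linear iota -> forall a v, iota (a *: v) = a%:C *: iota v.
Proof. by move=> lin a v; have := lin a v 0; rewrite !addr0 (lin0 lin) addr0. Qed.

Lemma lin_sum (R : realType) n p (iota : 'rV[R]_n -> 'M[R[i]]_p) I (r : seq I) (P : pred I) F :
  real_linear iota -> iota (\sum_(k <- r | P k) F k) = \sum_(k <- r | P k) iota (F k).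
Proof. by move=> lin; apply: (big_morph iota (linD lin) (lin0 lin)). Qed.

Lemma diag_key (R : realType) n N (iota : 'rV[R]_n -> 'M[R[i]]_N) :
  real_linear iota -> (forall v, herm_op (iota v)) -> abelian_theory iota ->
  exists (U : 'M[R[i]]_N) (a : 'I_N -> 'rV[R]_n),
    U *m ctr U = 1%:M /\ ctr U *m U = 1%:M /\
    forall v, U *m iota v *m ctr U = diag_mx (\row_j (pairing (a j) v)%:C).
Proof.
move=> lin herm ab.
pose E := fun k : 'I_n => iota (delta_mx 0 k).
have comm : {in [seq E k | k <- enum 'I_n] &, forall A B, comm_mx A B}.
  by move=> A B /mapP[k _ ->] /mapP[l _ ->]; exact: ab.
have [P Pu /allP Ptr] := cotrigonalization comm.
have PP : P *m ctr P = 1%:M by rewrite /ctr map_trmx; apply/unitarymxP.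
have PP' : ctr P *m P = 1%:M := mulmx1C PP.
pose T := fun k => P *m E k *m ctr P.
have Ttr k (i j : 'I_N) : (i < j)%N -> T k i j = 0.
  have := Ptr (E k); rewrite map_f ?mem_enum // => /(_ isT); rewrite inE /=.
  rewrite /similar_to conjymx // -map_trmx -/(ctr P) -/(T k).
  by move/is_trig_mxP; apply.
have Therm k : ctr (T k) = T k.
  by rewrite /T !ctr_mul ctrK herm mulmxA.
have Tij k (i j : 'I_N) : T k i j = (T k j i)^*%R.
  by rewrite -{1}Therm ctrE.
have Toff k (i j : 'I_N) : i != j -> T k i j = 0.
  move=> nij; case: (ltngtP i j) => [lij|lji|/val_inj eij]; first exact: Ttr.
    by rewrite Tij Ttr // conjC0.
  by rewrite eij eqxx in nij.
have Treal k j : T k j j \is Num.real by apply/CrealP; rewrite -Tij.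
pose a j := \row_k complex.Re (T k j j).
exists P, a; split; [done|split; [done|]].
move=> v; rewrite {1}(row_sum_delta v) (lin_sum _ _ _ lin).
rewrite mulmx_sumr mulmx_suml.
apply/matrixP => i j; rewrite summxE !mxE.
case: (eqVneq i j) => [<-|nij].
  rewrite mulr1n /pairing rmorph_sum; apply: eq_bigr => k _.
  rewrite (linZ lin) -scalemxAr -scalemxAl -/(T k) mxE [a i 0 k]mxE rmorphM /= RRe_real //.
  by rewrite mulrC.
rewrite /= mulr0n big1 // => k _.
by rewrite (linZ lin) -scalemxAr -scalemxAl mxE -/(T k) (Toff k i j nij) mulr0.
Qed.

Lemma pairing_delta (R : realType) n (x : 'rV[R]_n) k : pairing x (delta_mx 0 k) = x 0 k.
Proof.
rewrite /pairing (bigD1 k) //= mxE !eqxx mulr1 big1 ?addr0 // => j njk.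
by rewrite mxE (negbTE njk) andbF mulr0.
Qed.

Lemma pairing_inj (R : realType) n (x y : 'rV[R]_n) :
  (forall v, pairing x v = pairing y v) -> x = y.
Proof. by move=> H; apply/rowP => k; rewrite -!pairing_delta H. Qed.

Lemma pairing_sumZ (R : realType) n k (l : 'I_k -> R) (s : 'I_k -> 'rV[R]_n) v :
  pairing (\sum_i l i *: s i) v = \sum_i l i * pairing (s i) v.
Proof.
rewrite /pairing.
under eq_bigr do rewrite summxE mulr_suml.
rewrite exchange_big; apply: eq_bigr => i _; rewrite mulr_sumr.
by apply: eq_bigr => j _; rewrite mxE mulrA.
Qed.

Lemma conj_realC (R : realType) (r : R) : (r%:C)^*%R = r%:C.
Proof. by apply/CrealP/complex_realP; exists r. Qed.

Lemma weights_sub_conv (R : realType) n p (iota : 'rV[R]_n -> 'M[R[i]]_p) w :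
  weights iota w -> conv (weights iota) w.
Proof.
move=> Hw; exists 1%N, (fun _ => w), (fun _ => 1); split; first by [].
split; first by move=> _; exact: ler01.
by split; rewrite big_ord1 ?scale1r.
Qed.

Lemma star_mono (R : realType) n p (iota : 'rV[R]_n -> 'M[R[i]]_p) (X Y : set 'M[R[i]]_p) :
  X `<=` Y -> iota_star iota X `<=` iota_star iota Y.
Proof. by move=> XY a [rho [Xr H]]; exists rho; split => //; apply: XY. Qed.

Lemma pure_sub_dens (R : realType) p : @pure_states R p `<=` @density_ops R p.
Proof.
move=> rho; rewrite /pure_states /density_ops /=.
move=> [psi [n1 ->]]; split; last split.
- by rewrite /herm_op ctr_mul ctrK.
- move=> x; rewrite !mulmxA -[ctr x *m psi *m _ *m _]mulmxA .
  have -> : ctr psi *m x = ctr (ctr x *m psi) by rewrite ctr_mul ctrK.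
  rewrite mxE big_ord1 ctrE; exact: mul_conjC_ge0.
- by rewrite mxtrace_mulC n1 mxtrace1.
Qed.


Definition rep (R : realType) n p (iota : 'rV[R]_n -> 'M[R[i]]_p) (U : 'M[R[i]]_p)
  (a : 'I_p -> 'rV[R]_n) :=
  U *m ctr U = 1%:M /\ ctr U *m U = 1%:M /\
  forall v, U *m iota v *m ctr U = diag_mx (\row_j (pairing (a j) v)%:C).

Lemma rep_iota (R : realType) n p (iota : 'rV[R]_n -> 'M[R[i]]_p) U a :
  rep iota U a -> forall v,
  iota v = ctr U *m diag_mx (\row_j (pairing (a j) v)%:C) *m U.
Proof.
move=> [H1 [H2 HD]] v; by rewrite -HD !mulmxA H2 mul1mx -mulmxA H2 mulmx1.
Qed.

Lemma diag_delta (R : realType) p (d : 'rV[R[i]]_p) j :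
  diag_mx d *m delta_mx j 0 = d 0 j *: delta_mx j (0 : 'I_1).
Proof.
apply/matrixP => i k; rewrite mul_diag_mx !mxE.
by case: (eqVneq i j) => [->|nij] //=; rewrite !mulr0.
Qed.

Lemma weight_char (R : realType) n p (iota : 'rV[R]_n -> 'M[R[i]]_p) U a :
  rep iota U a -> forall w, weights iota w <-> exists j, w = a j.
Proof.
move=> Hr; have [H1 [H2 HD]] := Hr; move=> w; split.
  move=> [psi [nz Hpsi]].
  pose phi := U *m psi.
  have Hphi v : diag_mx (\row_j (pairing (a j) v)%:C) *m phi = (pairing w v)%:C *: phi.
    by rewrite /phi -HD -!mulmxA [ctr U *m _]mulmxA H2 mul1mx Hpsi -scalemxAr.
  have psiE : psi = ctr U *m phi by rewrite /phi mulmxA H2 mul1mx.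
  clearbody phi.
  have [j hj|h] := pickP (fun j => phi j 0 != 0); last first.
    case/negP: nz; apply/eqP.
    rewrite psiE.
    suff -> : phi = 0 by rewrite mulmx0.
    apply/matrixP => j k; rewrite ord1 [RHS]mxE.
    by move: (h j) => /= /negbFE /eqP.
  exists j; apply: pairing_inj => v; apply: complexI.
  move/matrixP: (Hphi v) => /(_ j 0).
  rewrite mul_diag_mx !mxE => /mulIf; move=> /(_ hj) //.
move=> [j ->]; exists (ctr U *m delta_mx j 0); split.
  apply/negP => /eqP h0.
  have := congr1 (mulmx U) h0; rewrite mulmxA H1 mul1mx mulmx0 => /matrixP /(_ j 0).
  by rewrite !mxE !eqxx /= => /eqP; rewrite oner_eq0.
move=> v; rewrite (rep_iota Hr) -!mulmxA (mulmxA U) H1 mul1mx diag_delta.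
by rewrite -scalemxAr mxE.
Qed.

Lemma trace_formula (R : realType) n p (iota : 'rV[R]_n -> 'M[R[i]]_p) U a :
  rep iota U a -> forall rho v,
  \tr (rho *m iota v) = \sum_j (U *m rho *m ctr U) j j * (pairing (a j) v)%:C.
Proof.
move=> Hr rho v; rewrite (rep_iota Hr) !mulmxA mxtrace_mulC !mulmxA.
rewrite mul_mx_diag /mxtrace; apply: eq_bigr => j _; rewrite !mxE //.
Qed.

Lemma delta_ctr (R : realType) p (j : 'I_p) :
  ctr (delta_mx j 0 : 'cV[R[i]]_p) = delta_mx 0 j.
Proof. by apply/matrixP => i k; rewrite !mxE andbC rmorph_nat. Qed.

Lemma dens_sub_conv (R : realType) n p (iota : 'rV[R]_n -> 'M[R[i]]_p) U a :
  rep iota U a -> iota_star iota (@density_ops R p) `<=` conv (weights iota).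
Proof.
move=> Hr; have [H1 [H2 HD]] := Hr.
move=> al [rho [[_ [psd tr1]] Hal]].
pose X := U *m rho *m ctr U.
have Xjj j : X j j = (ctr (ctr U *m (delta_mx j 0 : 'cV_p)) *m rho *m (ctr U *m (delta_mx j 0 : 'cV_p))) 0 0.
  rewrite ctr_mul ctrK delta_ctr !mulmxA.
  have -> : (delta_mx 0 j : 'rV_p) *m U *m rho *m ctr U = delta_mx 0 j *m X.
    by rewrite /X !mulmxA.
  by rewrite -rowE -colE !mxE.
have Xge j : 0 <= X j j by rewrite Xjj psd.
pose l j := complex.Re (X j j).
have lE j : (l j)%:C = X j j := RRe_real (ger0_real (Xge j)).
exists p, a, l; split; first by move=> j; apply/(weight_char Hr); exists j.
split; first by move=> j; rewrite -ler0c lE.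
split.
  apply: complexI; rewrite rmorph_sum rmorph1 /=.
  under eq_bigr do rewrite lE.
  rewrite -tr1; change (\tr X = \tr rho).
  by rewrite /X mxtrace_mulC mulmxA H2 mul1mx.
apply: pairing_inj => v; apply: complexI.
rewrite -Hal (trace_formula Hr) pairing_sumZ rmorph_sum; apply: eq_bigr => j _.
by rewrite rmorphM /= lE.
Qed.

Lemma conv_sub_pure (R : realType) n p (iota : 'rV[R]_n -> 'M[R[i]]_p) U a :
  rep iota U a -> conv (weights iota) `<=` iota_star iota (@pure_states R p).
Proof.
move=> Hr; have [H1 [H2 HD]] := Hr.
move=> x [k [s [l [Hs [l0 [l1 ->]]]]]].
have Hf i : exists j, s i == a j.
  by have [j ->] := (weight_char Hr _).1 (Hs i); exists j.
pose f i := xchoose (Hf i).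
have fP i : s i = a (f i) := eqP (xchooseP (Hf i)).
pose mu j := \sum_(i | f i == j) l i.
have mu0 j : 0 <= mu j by apply: sumr_ge0 => i _.
have muE (F : 'I_p -> R) : \sum_j mu j * F j = \sum_i l i * F (f i).
  rewrite (partition_big f xpredT) //=; apply: eq_bigr => j _.
  by rewrite /mu mulr_suml; apply: eq_bigr => i /eqP ->.
have musum : \sum_j mu j = 1.
  transitivity (\sum_j mu j * 1); first by apply: eq_bigr => j _; rewrite mulr1.
  by rewrite (muE (fun _ => 1)) -[RHS]l1; apply: eq_bigr => i _; rewrite mulr1.
pose phi : 'cV[R[i]]_p := \col_j (Num.sqrt (mu j))%:C.
have phiphi j : phi j 0 * (phi j 0)^*%R = (mu j)%:C.
  by rewrite mxE conj_realC -rmorphM -expr2 sqr_sqrtr.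
clearbody phi.
pose psi := ctr U *m phi.
have Upsi : U *m psi = phi by rewrite /psi mulmxA H1 mul1mx.
exists (psi *m ctr psi); split.
  exists psi; split=> //.
  rewrite /psi ctr_mul ctrK !mulmxA -(mulmxA (ctr phi)) H1 mulmx1.
  apply/matrixP => i j; rewrite !ord1 !mxE /=.
  under eq_bigr do rewrite ctrE mulrC phiphi.
  by rewrite -rmorph_sum musum.
move=> v; rewrite (trace_formula Hr).
have -> : U *m (psi *m ctr psi) *m ctr U = phi *m ctr phi.
  by rewrite mulmxA Upsi -mulmxA -ctr_mul Upsi.
under eq_bigr do rewrite mxE big_ord1 ctrE phiphi -rmorphM.
rewrite -rmorph_sum pairing_sumZ; congr (_%:C).
rewrite (muE (fun j => pairing (a j) v)); apply: eq_bigr => i _.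
by rewrite fP.
Qed.

Lemma dim_part (R : realType) n m (iota : 'rV[R]_n -> 'M[R[i]]_m.+1) U a :
  rep iota U a ->
  exists d, subspace_dim (preimage_span1 iota) d /\
            affine_dim (conv (weights iota)) (n - d).
Proof.
move=> Hr; have [H1 [H2 HD]] := Hr.
pose B : 'M[R]_(m.+1, n) := \matrix_j (a j - a ord0).
have vB v j : (v *m B^T) 0 j = pairing (a j) v - pairing (a ord0) v.
  rewrite !mxE /pairing -sumrB; apply: eq_bigr => k _.
  by rewrite !mxE mulrBr ![v 0 k * _]mulrC.
have Kchar v : preimage_span1 iota v <-> (v <= kermx B^T)%MS.
  rewrite sub_kermx; split.
    move=> [c Hc].
    have Dc : diag_mx (\row_j (pairing (a j) v)%:C) = (c%:C)%:M.
      by rewrite -HD Hc scalar_mxC -mulmxA H1 mulmx1.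
    have pj j : pairing (a j) v = c.
      by move/matrixP: Dc => /(_ j j); rewrite !mxE !eqxx /= !mulr1n => /complexI.
    by apply/eqP/matrixP => i j; rewrite ord1 vB !pj subrr mxE.
  move/eqP => h0; exists (pairing (a ord0) v).
  have pj j : pairing (a j) v = pairing (a ord0) v.
    by move/matrixP: h0 => /(_ 0 j); rewrite vB mxE => /eqP; rewrite subr_eq0 => /eqP.
  rewrite (rep_iota Hr v).
  have -> : \row_j (pairing (a j) v)%:C = const_mx (pairing (a ord0) v)%:C.
    by apply/rowP => j; rewrite !mxE pj.
  by rewrite diag_const_mx scalar_mxC -mulmxA H2 mulmx1.
exists (\rank (kermx B^T)); split.
  by exists n, (kermx B^T); split.
have convB x : conv (weights iota) x -> (x - a ord0 <= B)%MS.
  move=> [k [s [l [Hs [_ [l1 ->]]]]]].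
  have -> : \sum_i l i *: s i - a ord0 = \sum_i l i *: (s i - a ord0).
    rewrite -[X in _ - X]scale1r -l1 scaler_suml -sumrB.
    by apply: eq_bigr => i _; rewrite scalerBr.
  apply: summx_sub => i _; apply: scalemx_sub.
  have [j ->] := (weight_char Hr _).1 (Hs i).
  by rewrite -(rowK (fun j => a j - a ord0)) row_sub.
exists m.+1, B; split.
  move=> i; exists (a i), (a ord0); split; [|split].
  - by apply: weights_sub_conv; apply/(weight_char Hr); exists i.
  - by apply: weights_sub_conv; apply/(weight_char Hr); exists ord0.
  - by rewrite rowK.
split.
  move=> x y Hx Hy.
  have -> : x - y = (x - a ord0) + (-1) *: (y - a ord0).
    by rewrite scaleN1r opprB addrA subrK.
  by apply: addmx_sub; [exact: convB | apply: scalemx_sub; exact: convB].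
by rewrite mxrank_ker mxrank_tr subKn // rank_leq_col.
Qed.

Theorem proposition4p7 (R : realType) (n m : nat)
    (iota : 'rV[R]_n -> 'M[R[i]]_m.+1) (W : 'M[R[i]]_m.+1) :
  real_linear iota ->
  (forall v, herm_op (iota v)) ->
  herm_op W ->
  abelian_theory iota ->
  [/\ iota_star iota (@pure_states R m.+1) = conv (weights iota),
      iota_star iota (@density_ops R m.+1) = conv (weights iota),
      is_polytope (conv (weights iota)) &
      exists d, subspace_dim (preimage_span1 iota) d /\
                affine_dim (conv (weights iota)) (n - d)].
Proof.
move=> lin herm _ ab.
have [U [a Hr0]] := diag_key lin herm ab.
have Hr : rep iota U a := Hr0.
have E1 := dens_sub_conv Hr.
have E2 := conv_sub_pure Hr.
have E3 := star_mono (iota := iota) (@pure_sub_dens R m.+1).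
split.
- by apply/seteqP; split => x Hx; [apply: E1; apply: E3 | apply: E2].
- by apply/seteqP; split => x Hx; [apply: E1 | apply: E3; apply: E2].
- exists [seq a j | j <- enum 'I_m.+1]; congr conv; apply/seteqP; split => w /=.
    by move/(weight_char Hr) => [j ->]; apply: map_f; rewrite mem_enum.
  by move=> /mapP [j _ ->]; apply/(weight_char Hr); exists j.
- exact: dim_part Hr.
Qed.
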